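(* Let $G$ be a tree on $k\ge 2$ vertices, $n\ge 1$, and let $e$ be an edge of $G$. Then $\Gamma^G_n$ has exactly one $e$-cycle of length $2^n$, and for each $0\le i<n$ the number of $e$-cycles of length $2^i$ in $\Gamma^G_n$ is $(k-2)k^{n-i-1}$. (Every $e$-cycle has length $2^i$ for some $0\le i\le n$.)
   Context: Let $G=(V,E)$ be a finite tree with vertex set $V$ of size $k$, and fix an orientation of each edge, so that each edge becomes an ordered pair $e=(s,t)$. Each oriented edge $e=(s,t)$ acts on the set $V^*$ of finite words over the alphabet $V$ by the recursive rule: $e(\emptyset)=\emptyset$, $e(sw)=t\,e(w)$, $e(tw)=sw$, and $e(xw)=xw$ for $x\in V\setminus\{s,t\}$ (words are read left to right, $w\in V^*$). This action preserves word length. For $n\ge 1$, the Schreier graph $\Gamma_n^G$ is the multigraph with vertex set $V^n$ having, for each $u\in V^n$ and each oriented edge $e$ of $G$, one edge joining $u$ and $e(u)$, labelled $e$ (a loop if $e(u)=u$). For an edge $e$ of $G$, the $e$-cycles of $\Gamma_n^G$ are the subgraphs formed by an orbit of $e$ on $V^n$ together with the edges labelled $e$ between its vertices; an orbit of size $m$ gives an $e$-cycle of length $m$ (a loop if $m=1$, a pair of parallel edges if $m=2$). *)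

(* Defs.v *)
From mathcomp Require Import all_boot.
Set Implicit Arguments. Unset Strict Implicit. Unset Printing Implicit Defensive.

Section TreeDefs.
Variable V : finType.

Definition uadj (E : {set V * V}) : rel V :=
  fun x y => ((x, y) \in E) || ((y, x) \in E).

Definition is_orientation (E : {set V * V}) : Prop :=
  (forall x, (x, x) \notin E) /\
  (forall x y, (x, y) \in E -> (y, x) \notin E).

Definition graph_connected (E : {set V * V}) : Prop :=
  forall x y, connect (uadj E) x y.

Definition graph_acyclic (E : {set V * V}) : Prop :=
  forall c : seq V, uniq c -> 3 <= size c -> ~~ cycle (uadj E) c.

Definition is_oriented_tree (E : {set V * V}) : Prop :=
  [/\ is_orientation E, graph_connected E & graph_acyclic E].

Fixpoint edge_act (s t : V) (w : seq V) : seq V :=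
  match w with
  | [::] => [::]
  | x :: w' =>
      if x == s then t :: edge_act s t w'
      else if x == t then s :: w'
      else x :: w'
  end.

Lemma size_edge_act s t w : size (edge_act s t w) = size w.
Proof.
elim: w => [|x w IH] //=.
by case: ifP => _ /=; [rewrite IH | case: ifP].
Qed.

Lemma size_edge_act_tuple n s t (w : n.-tuple V) : size (edge_act s t w) == n.
Proof. by rewrite size_edge_act size_tuple. Qed.

Definition edge_actT n s t (w : n.-tuple V) : n.-tuple V :=
  Tuple (size_edge_act_tuple s t w).

Definition e_orbit n s t (u : n.-tuple V) : {set n.-tuple V} :=
  [set v | fconnect (@edge_actT n s t) u v].

(* the set of all e-orbits on V^n; an orbit of size m is an e-cycle of length m *)
Definition e_orbits n s t : {set {set n.-tuple V}} :=
  [set e_orbit s t u | u : n.-tuple V].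

End TreeDefs.

(* Main.v *)
Require Import Defs.
From mathcomp Require Import all_boot zify.
Set Implicit Arguments. Unset Strict Implicit. Unset Printing Implicit Defensive.

Section S.
Variable V : finType.
Variables s t : V.
Hypothesis hst : s != t.

Definition inst (x : V) := (x == s) || (x == t).
Fixpoint pl (w : seq V) : nat :=
  if w is x :: w' then (if inst x then (pl w').+1 else 0) else 0.
Fixpoint vl (w : seq V) : nat :=
  if w is x :: w' then (x == s) + 2 * vl w' else 0.

Lemma pl_size w : pl w <= size w.
Proof. elim: w => //= x w IH; case: ifP => //. Qed.

Lemma all_take_pl w : all inst (take (pl w) w).
Proof. elim: w => //= x w IH; case: ifP => //= ->; exact IH. Qed.

Lemma edge_act_split w :
  edge_act s t w = edge_act s t (take (pl w) w) ++ drop (pl w) w.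
Proof.
elim: w => //= x w IH; rewrite /inst.
case: (x =P s) => [->|xs] /=; first by rewrite eqxx /= IH.
case: (x =P t) => [->|xt] /=.
  have hts : (t == s) = false by apply/negbTE; rewrite eq_sym.
  by rewrite hts eqxx /= cat_take_drop.
by [].
Qed.

Lemma pl_edge_act w : pl (edge_act s t w) = pl w.
Proof.
elim: w => //= x w IH; rewrite /inst.
have hts : (t == s) = false by apply/negbTE; rewrite eq_sym.
case: (x =P s) => [->|xs] /=; first by rewrite /inst ?eqxx ?orbT IH.
case: (x =P t) => [xt|xt] /=; first by rewrite /inst eqxx.
by rewrite /inst; move/eqP/negbTE: xs => ->; move/eqP/negbTE: xt => ->.
Qed.

Lemma vl_lt p : vl p < 2 ^ size p.
Proof. elim: p => //= x p IH; rewrite expnS; case: (x == s) => /=; lia. Qed.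

Lemma all_edge_act p : all inst p -> all inst (edge_act s t p).
Proof.
elim: p => //= x p IH /andP[hx hp].
case: ifP => _ /=; first by rewrite /inst eqxx orbT IH.
case: ifP => _ /=; by rewrite ?hx ?hp /inst ?eqxx.
Qed.

Lemma vl_edge_act p : all inst p -> vl (edge_act s t p) = (vl p + 1) %% 2 ^ size p.
Proof.
elim: p => //= x p IH /andP[hx hp].
have hts : (t == s) = false by apply/negbTE; rewrite eq_sym.
case: (x =P s) => [xs|xs] /=.
  subst x; rewrite /= hts IH // add0n expnS muln_modr; congr (_ %% _); lia.
move: hx; rewrite /inst; move/eqP/negbTE: (xs) => -> /= /eqP ->; rewrite eqxx /=.
rewrite eqxx modn_small; first lia. rewrite expnS; have := vl_lt p; lia.
Qed.

Lemma vl_inj p q : all inst p -> all inst q -> size p = size q -> vl p = vl q -> p = q.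
Proof.
elim: p q => [|x p IH] [|y q] //= /andP[hx hp] /andP[hy hq] [hs] hv.
have hxy : (x == s) = (y == s) by case: (x == s) (y == s) hv => [] []; lia.
have -> : x = y.
  move: hx hy hxy; rewrite /inst.
  by case: (x =P s) => [->|_]; case: (y =P s) => [->|_] //= /eqP -> /eqP ->.
congr (_ :: _); apply: IH => //; case: (x == s) (y == s) hv hxy => [] [] //; lia.
Qed.

Definition vl' w := vl (take (pl w) w).
Notation g := (edge_act s t).

Lemma size_take_pl w : size (take (pl w) w) = pl w.
Proof. by rewrite size_takel // pl_size. Qed.

Lemma take_edge_act w : take (pl w) (g w) = g (take (pl w) w).
Proof.
rewrite {1}edge_act_split take_size_cat // size_edge_act size_take_pl //.
Qed.

Lemma drop_edge_act w : drop (pl w) (g w) = drop (pl w) w.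
Proof.
rewrite {1}edge_act_split drop_size_cat // size_edge_act size_take_pl //.
Qed.

Lemma vl'_edge_act w : vl' (g w) = (vl' w + 1) %% 2 ^ pl w.
Proof.
rewrite /vl' pl_edge_act take_edge_act vl_edge_act ?all_take_pl //.
by rewrite size_take_pl.
Qed.

Lemma pl_iter j w : pl (iter j g w) = pl w.
Proof. by elim: j => //= j IH; rewrite pl_edge_act. Qed.

Lemma drop_iter j w : drop (pl w) (iter j g w) = drop (pl w) w.
Proof. elim: j => //= j IH; by rewrite -{1}(pl_iter j w) drop_edge_act pl_iter. Qed.

Lemma vl'_iter j w : vl' (iter j g w) = (vl' w + j) %% 2 ^ pl w.
Proof.
elim: j => [|j IH] /=.
  by rewrite addn0 modn_small // /vl' -{2}(size_take_pl w) vl_lt.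
by rewrite vl'_edge_act IH pl_iter modnDml -addnA addn1.
Qed.

Lemma vl'_lt w : vl' w < 2 ^ pl w.
Proof. by rewrite /vl' -{2}(size_take_pl w) vl_lt. Qed.

Lemma seq_eq v w : pl v = pl w -> drop (pl v) v = drop (pl w) w -> vl' v = vl' w -> v = w.
Proof.
move=> hp hd hv; rewrite -(cat_take_drop (pl v) v) -(cat_take_drop (pl w) w) hd.
congr (_ ++ _); apply: vl_inj => //; rewrite ?all_take_pl ?size_take_pl //.
Qed.

Section Tup.
Variable n : nat.
Notation f := (@edge_actT V n s t).

Lemma val_iter j (u : n.-tuple V) : val (iter j f u) = iter j g (val u).
Proof. by elim: j => //= j ->. Qed.

Lemma orbitP (u v : n.-tuple V) :
  reflect (pl v = pl u /\ drop (pl u) v = drop (pl u) u) (v \in e_orbit s t u).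
Proof.
rewrite inE; apply: (iffP idP).
  move/iter_findex=> <-; by rewrite val_iter pl_iter drop_iter.
move=> [hp hd].
have hu : vl' (val u) < 2 ^ pl (val u) := vl'_lt _.
have hv : vl' (val v) < 2 ^ pl (val v) := vl'_lt _.
have hp' : pl (val v) = pl (val u) := hp.
have hd' : drop (pl (val u)) (val v) = drop (pl (val u)) (val u) := hd.
have -> : v = iter (vl' (val v) + (2 ^ pl (val u) - vl' (val u))) f u.
  apply: val_inj; rewrite val_iter; apply: seq_eq; rewrite ?pl_iter ?drop_iter //.
    by rewrite hp'.
  rewrite vl'_iter.
  have -> : vl' (val u) + (vl' (val v) + (2 ^ pl (val u) - vl' (val u))) = vl' (val v) + 2 ^ pl (val u) by rewrite hp' in hv; lia.
  by rewrite modnDr modn_small // -hp'.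
exact: fconnect_iter.
Qed.

Lemma card_orbit (u : n.-tuple V) : #|e_orbit s t u| = 2 ^ pl u.
Proof.
set m := pl u.
have -> : e_orbit s t u = [set iter (val j) f u | j : 'I_(2 ^ m)].
  apply/setP => v; apply/idP/imsetP.
    move=> hv; have := hv; rewrite inE => /iter_findex hi.
    exists (Ordinal (ltn_pmod (findex f u v) (expn_gt0 2 m))) => //=.
    move: (findex f u v) hi => k <-.
    apply: val_inj; rewrite !val_iter; apply: seq_eq; rewrite ?pl_iter ?drop_iter //.
    by rewrite !vl'_iter modnDmr.
  by move=> [j _ ->]; rewrite inE fconnect_iter.
rewrite card_imset ?card_ord // => i j /(congr1 (fun w : n.-tuple V => vl' (val w))).
rewrite !val_iter !vl'_iter -/m => /eqP; rewrite eqn_modDl !modn_small ?ltn_ord // => /eqP h.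
exact: val_inj.
Qed.
End Tup.
End S.


Lemma sum_tupleS (V : finType) n (F : seq V -> nat) :
  \sum_(u : n.+1.-tuple V) F u = \sum_(x : V) \sum_(w : n.-tuple V) F (x :: w).
Proof.
rewrite pair_bigA /=.
rewrite (reindex (fun p : V * n.-tuple V => [tuple of p.1 :: p.2])) //=.
exists (fun u : n.+1.-tuple V => (thead u, [tuple of behead u])) => [[x w] _|u _] /=.
  by congr (_, _); apply: val_inj.
by rewrite [RHS]tuple_eta.
Qed.

Lemma card_sum (T : finType) (P : pred T) : #|[set u | P u]| = \sum_u (P u : nat).
Proof.
rewrite -sum1_card big_mkcond /=; apply: eq_bigr => u _; rewrite inE; by case: (P u).
Qed.

Section C.
Variable V : finType.
Variables s t : V.
Hypothesis hst : s != t.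

Lemma sum_inst : \sum_(x : V) (inst s t x : nat) = 2.
Proof.
rewrite -card_sum.
have -> : [set x | inst s t x] = [set s; t] by apply/setP => x; rewrite !inE.
by rewrite cards2 hst.
Qed.

Lemma sum_ninst : \sum_(x : V) (~~ inst s t x : nat) = #|V| - 2.
Proof.
have h : forall x : V, (~~ inst s t x : nat) = 1 - inst s t x by move=> x; case: (inst s t x).
have := sum_inst; rewrite -sum1_card.
have -> : \sum_(x : V) 1 = \sum_(x : V) ((inst s t x : nat) + (~~ inst s t x : nat)).
  by apply: eq_bigr => x _; case: (inst s t x).
rewrite big_split /= => ->; lia.
Qed.


Definition cnt n i := \sum_(u : n.-tuple V) (pl s t u == i : nat).

Lemma cnt0 n : cnt n.+1 0 = (#|V| - 2) * #|V| ^ n.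
Proof.
rewrite /cnt (@sum_tupleS V n (fun w => (pl s t w == 0 : nat))) -sum_ninst big_distrl /=; apply: eq_bigr => x _.
rewrite -[#|V| ^ n](card_tuple n V) -sum1_card big_distrr /=; apply: eq_bigr => w _.
by case: (inst s t x) => /=; rewrite ?muln1.
Qed.

Lemma cntS n i : cnt n.+1 i.+1 = 2 * cnt n i.
Proof.
rewrite /cnt (@sum_tupleS V n (fun w => (pl s t w == i.+1 : nat))) -sum_inst big_distrl /=; apply: eq_bigr => x _.
rewrite big_distrr /=; apply: eq_bigr => w _.
by case: (inst s t x) => /=; rewrite ?mul1n ?mul0n.
Qed.

Lemma cnt_val n i : cnt n i = if i < n then 2 ^ i * ((#|V| - 2) * #|V| ^ (n - i - 1))
                              else (i == n) * 2 ^ n.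
Proof.
elim: n i => [|n IH] [|i].
- rewrite /cnt (eq_bigr (fun _ => 1)) ?sum1_card ?card_tuple //.
  by move=> [[|x w] //].
- rewrite /cnt big1 // => [[[|x w] //]].
- by rewrite cnt0 /= mul1n subn1.
- rewrite cntS IH ltnS eqSS; case: ifP => hi.
    by rewrite expnS mulnA; congr (_ * _ * (_ * _ ^ _)); lia.
  by case: (i == n); rewrite ?mul0n ?mul1n ?muln0 // expnS.
Qed.
End C.


Section M.
Variable V : finType.
Variables s t : V.
Hypothesis hst : s != t.
Variable n : nat.

Lemma orbit_eq (u v : n.-tuple V) : v \in e_orbit s t u -> e_orbit s t v = e_orbit s t u.
Proof.
move/(orbitP hst)=> [hp hd]; apply/setP => w.
apply/(orbitP hst)/(orbitP hst); rewrite hp; move=> [h1 h2]; split => //; first by rewrite h2.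
by rewrite h2.
Qed.

Lemma key i : #|[set C in e_orbits n s t | #|C| == 2 ^ i]| * 2 ^ i = cnt s t n i.
Proof.
set O := [set C in _ | _].
have -> : cnt s t n i = \sum_(u : n.-tuple V | pl s t u == i) 1.
  by rewrite /cnt [RHS]big_mkcond /=; apply: eq_bigr => u _; case: (_ == i).
rewrite (partition_big (fun u : n.-tuple V => e_orbit s t u) (mem O)); last first.
  by move=> u /eqP hu; rewrite !inE imset_f //= card_orbit // hu.
rewrite -sum_nat_const; apply: eq_bigr => C.
rewrite inE => /andP[/imsetP[u0 _ ->] hc].
rewrite card_orbit // eqn_exp2l // in hc.
rewrite -(eqP hc) -(card_orbit hst u0) -sum1_card [LHS]big_mkcond [RHS]big_mkcond /=; apply: eq_bigr => u _.
have -> : (pl s t u == pl s t u0) && (e_orbit s t u == e_orbit s t u0) = (u \in e_orbit s t u0).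
  apply/idP/idP.
    move=> /andP[_ /eqP <-]; by rewrite inE connect0.
  move=> hu; rewrite (orbit_eq hu) eqxx andbT.
  by case/(orbitP hst): hu => -> _.
by [].
Qed.
End M.

Unset Implicit Arguments.

Theorem proposition3p3 (V : finType) (E : {set V * V}) (n : nat) (s t : V) :
  is_oriented_tree E -> 2 <= #|V| -> 1 <= n -> (s, t) \in E ->
  [/\ #|[set C in e_orbits n s t | #|C| == 2 ^ n]| = 1,
      (forall i, i < n ->
         #|[set C in e_orbits n s t | #|C| == 2 ^ i]| = (#|V| - 2) * #|V| ^ (n - i - 1))
    & (forall C, C \in e_orbits n s t -> exists2 i, i <= n & #|C| = 2 ^ i)].
Proof.
move=> [[hloop _] _ _] _ _ hE.
have hst : s != t by apply/eqP => est; move: hE; rewrite est; apply/negP/hloop.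
split.
- have := key hst n n; rewrite cnt_val // ltnn eqxx mul1n.
  move=> h; apply/eqP; rewrite -(eqn_pmul2r (expn_gt0 2 n)) mul1n; exact/eqP.
- move=> i hi; have := key hst n i; rewrite cnt_val // hi mulnC => /eqP.
  by rewrite eqn_pmul2l ?expn_gt0 // => /eqP.
- move=> C /imsetP[u _ ->]; exists (pl s t u); last exact: card_orbit.
  by have := pl_size s t u; rewrite size_tuple.
Qed.
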